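(* Let $\Delta\subset G_{2m}$ be an open bounded set with $(\overline\Delta-\overline\Delta)\cap{\rm Sp}\,U=\{0\}$, and let $\Delta_1,\Delta_2\subset H_m$ be compact, disjoint, with $\Delta_1+\Delta_2\subset\Delta$. Then there exist disjoint open neighbourhoods $O_1,O_2\subset\mathbb{R}^{1+d}$ of $\Delta_1,\Delta_2$ respectively such that for all compact $K_1,K_2\subset\mathbb{R}^{1+d}$ with $-K_i\subset O_i$ and $-K_i\cap{\rm Sp}\,U\subset\Delta_i$ ($i=1,2$) one has: $(\overline\Delta+K_1+K_2)\cap{\rm Sp}\,U\subset\{0\}$; $-(K_1+K_2)\subset\Delta$; $(\Delta_i+K_i)\cap{\rm Sp}\,U\subset\{0\}$ for $i=1,2$; and $(\Delta_i+K_j)\cap{\rm Sp}\,U=\emptyset$ for $i\ne j$.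
   Context: ${\rm Sp}\,U\subset\mathbb{R}^{1+d}$ is a set of the form $\{0\}\cup H_m\cup G_\mu$ with $H_m=\{(E,p)\in\mathbb{R}^{1+d}:E=\sqrt{p^2+m^2}\}$, $G_\mu=\{(E,p):E\ge\sqrt{p^2+\mu^2}\}$, $0<m<\mu\le2m$ (it is the joint spectrum of the energy-momentum operators of a translation representation $U$). $G_{2m}$ is $G_\mu$ with $\mu=2m$. *)

(* Defs.v *)
(* Points of R^{1+d} are row vectors 'rV[R]_(d.+1):
   coordinate 0 is the energy E, coordinates 1..d the momentum p. *)
From HB Require Import structures.
From mathcomp Require Import all_boot all_order all_algebra.
From mathcomp Require Import all_classical all_reals all_analysis.
Set Implicit Arguments. Unset Strict Implicit. Unset Printing Implicit Defensive.
Import Order.TTheory GRing.Theory Num.Theory.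
Import numFieldNormedType.Exports.
Local Open Scope classical_set_scope.
Local Open Scope ring_scope.

Section Defs.
Variables (R : realType) (d : nat).
Definition pt := 'rV[R]_(d.+1).

Definition energy (x : pt) : R := x 0 ord0.
Definition psq (x : pt) : R := \sum_(i < d) (x 0 (lift ord0 i)) ^+ 2.

Definition Hm (m : R) : set pt := [set x | energy x = Num.sqrt (psq x + m ^+ 2)].
Definition Gmu (mu : R) : set pt := [set x | Num.sqrt (psq x + mu ^+ 2) <= energy x].
Definition SpU (m mu : R) : set pt := [set 0] `|` Hm m `|` Gmu mu.

Definition minksum (A B : set pt) : set pt := [set x + y | x in A & y in B].
Definition minkdiff (A B : set pt) : set pt := [set x - y | x in A & y in B].
Definition minkneg (A : set pt) : set pt := [set - x | x in A].
End Defs.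

(* Main.v *)
Require Import Defs.
From HB Require Import structures.
From mathcomp Require Import all_boot all_order all_algebra.
From mathcomp Require Import all_classical all_reals all_analysis.
From mathcomp Require Import ring lra.
Import Order.TTheory GRing.Theory Num.Theory.
Import numFieldNormedType.Exports.
Local Open Scope classical_set_scope.
Local Open Scope ring_scope.

Section H.
Variables (R : realType) (d : nat).
Local Notation pt := 'rV[R]_(d.+1).

Lemma ballE (x y : pt) (e : R) : ball x e y <-> `|x - y| < e.
Proof. by rewrite -ball_normE. Qed.

Lemma coord_le (x : pt) i : `|x 0 i| <= `|x|.
Proof.
have /mapP[j Hj ->] : `|x 0 i| \in [seq `|x k.1 k.2| | k : 'I_1 * 'I_(d.+1)].
  by apply/mapP; exists (ord0, i) => //=; rewrite mem_enum.
by rewrite [leRHS]/Num.Def.normr /= mx_normrE; apply/bigmax_geP; right => /=; exists j.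
Qed.

Definition fE (m : R) (y : pt) : R := energy y - Num.sqrt (psq y + m ^+ 2).

Lemma energy_cont : continuous (@energy R d).
Proof. move=> y; exact: (@coord_continuous R 1 d.+1 0 ord0 y). Qed.

Lemma psq_cont : continuous (@psq R d).
Proof.
rewrite /psq; apply: (@continuous_big _ _ +%R 0 xpredT add_continuous).
move=> i _ y; apply: cvgM.
- exact: nbhs_filter.
- exact (@coord_continuous R 1 d.+1 0 (lift ord0 i) y).
- exact (@coord_continuous R 1 d.+1 0 (lift ord0 i) y).
Qed.

Lemma fE_cont m : continuous (fE m).
Proof.
move=> y; apply: cvgB.
- exact: nbhs_filter.
- exact (energy_cont y).
apply: (@continuous_comp _ _ _ (fun x => psq x + m^+2) Num.sqrt); last exact: sqrt_continuous.
apply: cvgD.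
- exact: nbhs_filter.
- exact (psq_cont y).
- apply: cvg_cst. exact: nbhs_filter.
Qed.

Lemma psq_ge0 (y : pt) : 0 <= psq y.
Proof. by apply: sumr_ge0 => i _; apply: sqr_ge0. Qed.

Lemma le_sqrt_add (a m : R) : 0 <= m -> 0 <= a -> m <= Num.sqrt (a + m ^+ 2).
Proof.
move=> m0 a0; apply: (@le_trans _ _ (Num.sqrt (m ^+ 2))).
  by rewrite sqrtr_sqr ger0_norm.
by rewrite ler_sqrt ?lerDr // addr_ge0 // sqr_ge0.
Qed.

Lemma energy_lb m mu (y : pt) : 0 < m -> m < mu -> SpU m mu y -> y != 0 ->
  0 <= fE m y /\ m <= energy y.
Proof.
move=> m0 mmu [[->|Hy]|Hy]; rewrite ?eqxx // => _; rewrite /fE.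
- rewrite Hy subrr; split => //; exact: le_sqrt_add (ltW m0) (psq_ge0 y).
- have h1 : Num.sqrt (psq y + m ^+ 2) <= Num.sqrt (psq y + mu ^+ 2).
    rewrite ler_sqrt; last by rewrite addr_ge0 ?psq_ge0 ?sqr_ge0.
    rewrite lerD2l ler_sqr ?nnegrE ?ltW // (lt_trans m0 mmu) //.
  split; first by rewrite subr_ge0; apply: le_trans h1 Hy.
  apply: le_trans Hy; apply: le_trans h1.
  exact: le_sqrt_add (ltW m0) (psq_ge0 y).
Qed.


Lemma key_ineq (A B C Sw Sv P m : R) : 0 < m -> 0 <= A -> 0 <= B -> 0 <= C ->
  0 <= Sw -> 0 <= Sv ->
  A ^+ 2 = Sw + 2 * P + Sv + m ^+ 2 -> B ^+ 2 = Sw + m ^+ 2 -> C ^+ 2 = Sv + m ^+ 2 ->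
  0 <= C ^+ 2 * Sw - 2 * (B * C) * P + B ^+ 2 * Sv ->
  A - C - B < 0.
Proof.
move=> m0 A0 B0 C0 Sw0 Sv0 hA hB hC hcs.
have Bp : 0 < B.
  rewrite lt_neqAle B0 andbT; apply/eqP => hb.
  move: hB; rewrite -hb expr0n /= => h.
  have : 0 < Sw + m ^+ 2 by rewrite ltr_pwDr ?exprn_gt0.
  by rewrite -h ltxx.
have Cp : 0 < C.
  rewrite lt_neqAle C0 andbT; apply/eqP => hb.
  move: hC; rewrite -hb expr0n /= => h.
  have : 0 < Sv + m ^+ 2 by rewrite ltr_pwDr ?exprn_gt0.
  by rewrite -h ltxx.
have BC : 0 < B * C by rewrite mulr_gt0.
have hP : P < B * C.
  have h1 : 0 <= (B * C) * (2 * (B * C) - 2 * P) - m ^+ 2 * (B ^+ 2 + C ^+ 2).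
    have eSw : Sw = B ^+ 2 - m ^+ 2 by rewrite hB; ring.
    have eSv : Sv = C ^+ 2 - m ^+ 2 by rewrite hC; ring.
    rewrite eSw eSv in hcs.
    have -> : (B * C) * (2 * (B * C) - 2 * P) - m ^+ 2 * (B ^+ 2 + C ^+ 2) =
      C ^+ 2 * (B ^+ 2 - m ^+ 2) - 2 * (B * C) * P + B ^+ 2 * (C ^+ 2 - m ^+ 2) by ring.
    by [].
  have h2 : 0 < m ^+ 2 * (B ^+ 2 + C ^+ 2).
    by apply: mulr_gt0; [exact: exprn_gt0 | apply: addr_gt0; exact: exprn_gt0].
  nra.
have hA2 : A ^+ 2 < (B + C) ^+ 2 by rewrite hA; nra.
have : A < B + C.
  by move: hA2; rewrite ltr_pXn2r // ?nnegrE // addr_ge0.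
lra.
Qed.


Lemma fE_diff_lt0 m (a b : pt) : 0 < m -> Hm m a -> Hm m b -> fE m (a - b) < 0.
Proof.
move=> m0 ha hb; rewrite /fE.
have eE : energy (a - b) = energy a - energy b by rewrite /energy !mxE.
pose u i := a 0 (lift ord0 i); pose v i := b 0 (lift ord0 i).
have eS : psq (a - b) = \sum_(i < d) (u i - v i) ^+ 2.
  by apply: eq_bigr => i _; rewrite !mxE.
set Sw := \sum_(i < d) (u i - v i) ^+ 2 in eS.
set P := \sum_(i < d) (u i - v i) * v i.
have eSu : psq a = Sw + 2 * P + psq b.
  rewrite /psq /Sw /P.
  have -> : \sum_(i < d) a 0 (lift ord0 i) ^+ 2 =
     \sum_(i < d) ((u i - v i) ^+ 2 + 2 * ((u i - v i) * v i) + v i ^+ 2).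
    by apply: eq_bigr => i _; rewrite /u /v; ring.
  by rewrite !big_split /= -mulr_sumr.
rewrite eE eS ha hb.
set A := Num.sqrt (psq a + m ^+ 2).
set B := Num.sqrt (Sw + m ^+ 2).
set C := Num.sqrt (psq b + m ^+ 2).
have Sw0 : 0 <= Sw by apply: sumr_ge0 => i _; exact: sqr_ge0.
have hcs : 0 <= C ^+ 2 * Sw - 2 * (B * C) * P + B ^+ 2 * psq b.
  have -> : C ^+ 2 * Sw - 2 * (B * C) * P + B ^+ 2 * psq b =
     \sum_(i < d) (C * (u i - v i) - B * v i) ^+ 2.
    rewrite /Sw /P /psq.
    have -> : \sum_(i < d) (C * (u i - v i) - B * v i) ^+ 2 =
      \sum_(i < d) (C ^+ 2 * (u i - v i) ^+ 2 - 2 * (B * C) * ((u i - v i) * v i)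
         + B ^+ 2 * v i ^+ 2).
      by apply: eq_bigr => i _; ring.
    rewrite big_split /= big_split /= sumrN -!mulr_sumr.
    by [].
  by apply: sumr_ge0 => i _; exact: sqr_ge0.
apply: (@key_ineq A B C Sw (psq b) P m) => //.
- exact: sqrtr_ge0.
- exact: sqrtr_ge0.
- exact: sqrtr_ge0.
- exact: psq_ge0.
- by rewrite /A sqr_sqrtr ?addr_ge0 ?psq_ge0 ?sqr_ge0 // eSu.
- by rewrite /B sqr_sqrtr // addr_ge0 ?sqr_ge0.
- by rewrite /C sqr_sqrtr // addr_ge0 ?psq_ge0 ?sqr_ge0.
Qed.


Lemma sep_near m mu (a b : pt) : 0 < m -> m < mu -> Hm m a -> Hm m b ->
  exists2 r : R, 0 < r & forall y : pt, `|(a - b) - y| < r -> SpU m mu y -> y = 0.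
Proof.
move=> m0 mmu ha hb.
have := @cvgr_lt R _ _ _ (fE m) (fE m (a - b)) (fE_cont m (a - b)) 0 (@fE_diff_lt0 m a b m0 ha hb).
move=> /(_ (nbhs_filter _)) /nbhs_ballP [r r0 hr]; exists r => // y hy sy.
apply/eqP; apply/negPn/negP => yn0.
have [h1 _] := @energy_lb m mu y m0 mmu sy yn0.
have : fE m y < 0 by apply: hr; apply/ballE.
by rewrite ltNge h1.
Qed.


Lemma unif (A : set (pt * pt)) (P : R -> pt * pt -> Prop) : compact A ->
  (forall p, A p -> exists2 r : R, 0 < r & forall q e,
     `|p.1 - q.1| < r -> `|p.2 - q.2| < r -> `|e| < r -> P e q) ->
  exists2 e : R, 0 < e & forall q, A q -> P e q.
Proof.
move=> /compact_near_coveringP cA hP.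
have := cA R (nbhs (0:R)) P _.
move=> /(_ _) H.
have : \forall e \near nbhs (0:R), A `<=` P e.
  apply: H => x Ax; have [r r0 hr] := hP x Ax.
  exists (ball x.1 r `*` ball x.2 r, ball 0 r).
    split => /=.
    - by exists (ball x.1 r, ball x.2 r) => //=; split; exact: nbhsx_ballx.
    - exact: nbhsx_ballx.
  move=> [[q1 q2] e] /= [[h1 h2] h3]; apply: hr => /=.
  - exact (proj1 (ballE x.1 q1 r) h1).
  - exact (proj1 (ballE x.2 q2 r) h2).
  - by move: h3; rewrite -ball_normE /ball_ /= sub0r normrN.
move=> /nbhs_ballP [r r0 hr].
exists (r / 2); first by rewrite divr_gt0.
apply: hr; rewrite -ball_normE /ball_ /= sub0r normrN ger0_norm ?divr_ge0 ?ltW //.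
by rewrite ltr_pdivrMr // ltr_pMr // ltr1n.
Qed.


Lemma tri3 (u v w : pt) : `|u - v - w| <= `|u| + `|v| + `|w|.
Proof. by apply: (le_trans (ler_normB _ _)); rewrite lerD2r ler_normB. Qed.

Lemma tri4 (u v w z : pt) : `|u + v + w + z| <= `|u| + `|v| + `|w| + `|z|.
Proof.
apply: (le_trans (ler_normD _ _)); rewrite lerD2r.
apply: (le_trans (ler_normD _ _)); rewrite lerD2r.
exact: ler_normD.
Qed.

Lemma P3lem m mu (D : set pt) : compact D -> D `<=` Hm m -> 0 < m -> m < mu ->
  exists2 e : R, 0 < e & forall a b x, D a -> D b -> `|b - x| < e ->
    SpU m mu (a - x) -> a = x.
Proof.
move=> cD hD m0 mmu.
pose P := fun e (q : pt * pt) => forall x, `|q.2 - x| < e ->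
   SpU m mu (q.1 - x) -> q.1 = x.
suff Hu : forall p, (D `*` D) p -> exists2 r : R, 0 < r & forall q e,
     `|p.1 - q.1| < r -> `|p.2 - q.2| < r -> `|e| < r -> P e q.
  have [e e0 H] := @unif (D `*` D) P (compact_setX cD cD) Hu.
  by exists e => // a b x Da Db; exact: (H (a, b) (conj Da Db) x).
move=> [a b] [Da Db] /=.
have [r r0 hr] := @sep_near m mu a b m0 mmu (hD _ Da) (hD _ Db).
exists (r / 3); first by rewrite divr_gt0.
move=> [q1 q2] e /= h1 h2 h3 x hx sx.
apply/eqP; rewrite -subr_eq0; apply/eqP; apply: hr => //.
have -> : a - b - (q1 - x) = (a - q1) - (b - q2) - (q2 - x).
  by apply/matrixP => i j; rewrite !mxE; ring.
apply: (le_lt_trans (tri3 _ _ _)).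
have he : e <= `|e| := ler_norm e.
lra.
Qed.

Lemma P12lem (Delta D1 D2 : set pt) : open Delta -> compact D1 -> compact D2 ->
  D1 `&` D2 = set0 -> minksum D1 D2 `<=` Delta ->
  exists2 e : R, 0 < e & forall a b, D1 a -> D2 b ->
    (forall x y, `|a - x| < e -> `|b - y| < e -> Delta (x + y)) /\
    (forall x, `|a - x| < e -> `|b - x| < e -> False).
Proof.
move=> oD cD1 cD2 dj hs.
pose P := fun e (q : pt * pt) =>
    (forall x y, `|q.1 - x| < e -> `|q.2 - y| < e -> Delta (x + y)) /\
    (forall x, `|q.1 - x| < e -> `|q.2 - x| < e -> False).
suff Hu : forall p, (D1 `*` D2) p -> exists2 r : R, 0 < r & forall q e,
     `|p.1 - q.1| < r -> `|p.2 - q.2| < r -> `|e| < r -> P e q.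
  have [e e0 H] := @unif (D1 `*` D2) P (compact_setX cD1 cD2) Hu.
  by exists e => // a b Da Db; exact: (H (a, b) (conj Da Db)).
move=> [a b] [Da Db] /=.
have hab : Delta (a + b) by apply: hs; exists a => //; exists b.
have := oD; rewrite openE => /(_ _ hab) /nbhs_ballP [r1 r10 hr1].
have r20 : 0 < `|a - b|.
  rewrite normr_gt0 subr_eq0; apply/eqP => eab.
  have : (D1 `&` D2) a by split => //; rewrite eab.
  by rewrite dj.
set r2 := `|a - b| in r20.
set mn := Num.min r1 r2.
have hm1 : mn <= r1 by rewrite /mn ge_min lexx.
have hm2 : mn <= r2 by rewrite /mn ge_min lexx orbT.
have mn0 : 0 < mn by rewrite /mn lt_min r10 r20.
exists (mn / 4); first by rewrite divr_gt0.
move=> [q1 q2] e /= h1 h2 h3; have he : e <= `|e| := ler_norm e.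
split.
  move=> x y hx hy; apply: hr1; apply/ballE.
  have -> : a + b - (x + y) = (a - q1) + (q1 - x) + (b - q2) + (q2 - y).
    by apply/matrixP => i j; rewrite !mxE; ring.
  apply: (le_lt_trans (tri4 _ _ _ _)); lra.
move=> x hx hy.
have : `|a - b| < r2.
  have -> : a - b = (a - q1) + (q1 - x) + - (q2 - x) + - (b - q2).
    by apply/matrixP => i j; rewrite !mxE; ring.
  apply: (le_lt_trans (tri4 _ _ _ _)); rewrite !normrN; lra.
by rewrite ltxx.
Qed.

End H.

Theorem lemma7p3 (R : realType) (d : nat) (m mu : R)
  (hm : 0 < m) (hmmu : m < mu) (hmu2 : mu <= 2 * m)
  (Delta D1 D2 : set 'rV[R]_(d.+1)) :
  open Delta -> bounded_set Delta -> Delta `<=` Gmu (2 * m) ->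
  minkdiff (closure Delta) (closure Delta) `&` SpU m mu = [set 0] ->
  D1 `<=` Hm m -> D2 `<=` Hm m -> compact D1 -> compact D2 ->
  D1 `&` D2 = set0 -> minksum D1 D2 `<=` Delta ->
  exists O1 O2 : set 'rV[R]_(d.+1),
    [/\ open O1, open O2, D1 `<=` O1, D2 `<=` O2 & O1 `&` O2 = set0] /\
    forall K1 K2 : set 'rV[R]_(d.+1),
      compact K1 -> compact K2 ->
      minkneg K1 `<=` O1 -> minkneg K2 `<=` O2 ->
      minkneg K1 `&` SpU m mu `<=` D1 -> minkneg K2 `&` SpU m mu `<=` D2 ->
      minksum (minksum (closure Delta) K1) K2 `&` SpU m mu `<=` [set 0] /\
      minkneg (minksum K1 K2) `<=` Delta /\
      minksum D1 K1 `&` SpU m mu `<=` [set 0] /\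
      minksum D2 K2 `&` SpU m mu `<=` [set 0] /\
      minksum D1 K2 `&` SpU m mu = set0 /\
      minksum D2 K1 `&` SpU m mu = set0.
Proof.
move=> oD _ _ hdiff hD1 hD2 cD1 cD2 dj hs.
have [e3 e30 H3] := @P3lem R d m mu (D1 `|` D2) (compactU cD1 cD2)
  (fun x => fun h => match h with or_introl h1 => hD1 x h1 | or_intror h2 => hD2 x h2 end) hm hmmu.
have [e12 e120 H12] := @P12lem R d Delta D1 D2 oD cD1 cD2 dj hs.
pose e := Num.min e3 e12.
have he3 : e <= e3 by rewrite /e ge_min lexx.
have he12 : e <= e12 by rewrite /e ge_min lexx orbT.
have e0 : 0 < e by rewrite /e lt_min e30 e120.
have P3 : forall a b x, (D1 `|` D2) a -> (D1 `|` D2) b -> `|b - x| < e ->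
    SpU m mu (a - x) -> a = x.
  move=> a b x Da Db hx; apply: H3 Da Db _; exact: lt_le_trans hx he3.
have P1 : forall a b x y, D1 a -> D2 b -> `|a - x| < e -> `|b - y| < e -> Delta (x + y).
  move=> a b x y Da Db hx hy; apply: (proj1 (H12 a b Da Db)).
  - exact: lt_le_trans hx he12.
  - exact: lt_le_trans hy he12.
have P2 : forall a b x, D1 a -> D2 b -> `|a - x| < e -> `|b - x| < e -> False.
  move=> a b x Da Db hx hy; apply: (proj2 (H12 a b Da Db) x).
  - exact: lt_le_trans hx he12.
  - exact: lt_le_trans hy he12.
pose O1 := [set x | exists2 a, D1 a & `|a - x| < e].
pose O2 := [set x | exists2 a, D2 a & `|a - x| < e].
have oO : forall D : set 'rV[R]_(d.+1), open [set x | exists2 a, D a & `|a - x| < e].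
  move=> D.
  have -> : [set x | exists2 a, D a & `|a - x| < e] = \bigcup_(a in D) ball a e.
    apply/seteqP; split => x [a Da h]; exists a => //; exact/ballE.
  by apply: bigcup_open => a _; exact: ball_open.
have in0 : forall a : 'rV[R]_(d.+1), `|a - a| < e by move=> a; rewrite subrr normr0.
exists O1, O2; split.
  split.
  - exact: oO.
  - exact: oO.
  - by move=> a Da; exists a.
  - by move=> a Da; exists a.
  - apply/seteqP; split => // x [[a Da ha] [b Db hb]]; exact: (P2 a b x Da Db).
move=> K1 K2 _ _ hK1 hK2 _ _.
have nK1 : forall k, K1 k -> exists2 a, D1 a & `|a - - k| < e.
  by move=> k Kk; apply: hK1; exists k.
have nK2 : forall k, K2 k -> exists2 a, D2 a & `|a - - k| < e.
  by move=> k Kk; apply: hK2; exists k.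
have part2 : minkneg (minksum K1 K2) `<=` Delta.
  move=> z [w [k1 Hk1 [k2 Hk2 <-]] <-].
  have [a Da ha] := nK1 _ Hk1; have [b Db hb] := nK2 _ Hk2.
  by rewrite opprD; exact: (P1 a b _ _ Da Db ha hb).
split.
  move=> z [[w [c Hc [k1 Hk1 <-]] [k2 Hk2 <-]] Sz].
  have : (minkdiff (closure Delta) (closure Delta) `&` SpU m mu) (c + k1 + k2).
    split => //; exists c => //; exists (- (k1 + k2)).
      by apply: subset_closure; apply: part2; exists (k1 + k2) => //; exists k1 => //; exists k2.
    by rewrite opprK addrA.
  by rewrite hdiff.
split; first exact: part2.
split.
  move=> z [[a Da [k Hk <-]] Sz] /=.
  have [a' Da' ha'] := nK1 _ Hk.
  have := P3 a a' (- k) (or_introl Da) (or_introl Da') ha'; rewrite opprK => /(_ Sz) ->.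
  by rewrite addNr.
split.
  move=> z [[a Da [k Hk <-]] Sz] /=.
  have [a' Da' ha'] := nK2 _ Hk.
  have := P3 a a' (- k) (or_intror Da) (or_intror Da') ha'; rewrite opprK => /(_ Sz) ->.
  by rewrite addNr.
split.
  apply/seteqP; split => // z [[a Da [k Hk <-]] Sz] /=.
  have [b Db hb] := nK2 _ Hk.
  have := P3 a b (- k) (or_introl Da) (or_intror Db) hb; rewrite opprK => /(_ Sz) eak.
  by apply: (P2 a b (- k) Da Db) => //; rewrite -eak.
apply/seteqP; split => // z [[b Db [k Hk <-]] Sz] /=.
have [a Da ha] := nK1 _ Hk.
have := P3 b a (- k) (or_intror Db) (or_introl Da) ha; rewrite opprK => /(_ Sz) ebk.
by apply: (P2 a b (- k) Da Db) => //; rewrite -ebk.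
Qed.
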